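(* Let $G$ be a two-player stage game with $|V_1^{p,p}|=1$ and $|V_2^{p,p}|>1$. If $G\notin\mathcal{G}_{LS}^{p,p}$, then $G\notin\mathcal{G}_{LS}^{m,p}$.
   Context: A two-player stage game $G$ has finite nonempty action sets $A_1,A_2$ and payoffs $u_1,u_2:A_1\times A_2\to\mathbb{R}$, extended to mixed strategies by expectation. $G(T)$ is the $T$-round repetition with realized actions observed each round and payoffs the expected sum of stage payoffs; an SPE of $G(T)$ is a strategy profile whose continuation after every history of length $k<T$ is a Nash equilibrium of $G(T-k)$. Regimes: pure-pure ($p,p$): both players restricted to actions (in the stage game and in every round, including deviations); mixed-pure ($m,p$): player 1 may mix, player 2 uses only actions; mixed-mixed ($m,m$): both may mix. For regime $r$, $\mathrm{Nash}^r(G)$ is the set of stage-game profiles available in $r$ from which no player can profitably deviate unilaterally to a strategy available in $r$, and $V_i^r=\{u_i(\sigma):\sigma\in\mathrm{Nash}^r(G)\}$. Locally suboptimal behavior occurs in an SPE $\mu$ of $G(T)$ (regime $r$) if for some history $h$ of length $k<T$, $(\mu_1(h),\mu_2(h))\notin\mathrm{Nash}^r(G)$. $\mathcal{G}_{LS}^r$ is the set of stage games $G$ for which there exist $T\ge1$ and an SPE of $G(T)$ in regime $r$ in which locally suboptimal behavior occurs. *)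

(* Defs.v *)
From HB Require Import structures.
From mathcomp Require Import all_boot all_order all_algebra.
From mathcomp Require Import reals.
Set Implicit Arguments. Unset Strict Implicit. Unset Printing Implicit Defensive.
Import Order.TTheory GRing.Theory Num.Theory.
Local Open Scope ring_scope.

Section Game.
Variables (R : realType) (A1 A2 : finType).

Definition is_mixed (A : finType) (d : {ffun A -> R}) : Prop :=
  (forall a, 0 <= d a) /\ \sum_(a : A) d a = 1.

Definition is_pure (A : finType) (d : {ffun A -> R}) : Prop :=
  exists a : A, forall b : A, d b = (if b == a then 1 else 0).

(* A regime: (player 1 may mix, player 2 may mix).
   (p,p) = (false,false), (m,p) = (true,false), (m,m) = (true,true). *)
Definition regime := (bool * bool)%type.
Definition reg_pp : regime := (false, false).
Definition reg_mp : regime := (true, false).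
Definition reg_mm : regime := (true, true).

Definition avail (mix : bool) (A : finType) (d : {ffun A -> R}) : Prop :=
  if mix then is_mixed d else is_pure d.

Definition eu (u : A1 -> A2 -> R) (d1 : {ffun A1 -> R}) (d2 : {ffun A2 -> R}) : R :=
  \sum_(a1 : A1) \sum_(a2 : A2) d1 a1 * d2 a2 * u a1 a2.

Definition stageNash (r : regime) (u1 u2 : A1 -> A2 -> R)
    (d1 : {ffun A1 -> R}) (d2 : {ffun A2 -> R}) : Prop :=
  [/\ avail r.1 d1, avail r.2 d2,
      (forall d1', avail r.1 d1' -> eu u1 d1' d2 <= eu u1 d1 d2) &
      (forall d2', avail r.2 d2' -> eu u2 d1 d2' <= eu u2 d1 d2)].

(* x \in V_i^r, where u is the payoff u_i of player i *)
Definition inV (r : regime) (u1 u2 : A1 -> A2 -> R) (u : A1 -> A2 -> R) (x : R) : Prop :=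
  exists d1 d2, stageNash r u1 u2 d1 d2 /\ x = eu u d1 d2.

(* histories: sequences of realized action profiles, earliest first *)
Definition history := seq (A1 * A2)%type.

Definition strat (A : finType) := history -> {ffun A -> R}.

Definition avail_strat (mix : bool) (A : finType) (s : strat A) : Prop :=
  forall h, avail mix (s h).

Fixpoint pay (u : A1 -> A2 -> R) (n : nat) (s1 : strat A1) (s2 : strat A2)
    (h : history) : R :=
  match n with
  | 0 => 0
  | n'.+1 => \sum_(a1 : A1) \sum_(a2 : A2)
              s1 h a1 * s2 h a2 * (u a1 a2 + pay u n' s1 s2 (rcons h (a1, a2)))
  end.

Definition payoff (u : A1 -> A2 -> R) (n : nat) (s1 : strat A1) (s2 : strat A2) : R :=
  pay u n s1 s2 [::].

Definition cont (A : finType) (s : strat A) (h : history) : strat A :=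
  fun h' => s (h ++ h').

Definition repNash (r : regime) (u1 u2 : A1 -> A2 -> R) (n : nat)
    (s1 : strat A1) (s2 : strat A2) : Prop :=
  (forall s1', avail_strat r.1 s1' -> payoff u1 n s1' s2 <= payoff u1 n s1 s2) /\
  (forall s2', avail_strat r.2 s2' -> payoff u2 n s1 s2' <= payoff u2 n s1 s2).

Definition SPE (r : regime) (u1 u2 : A1 -> A2 -> R) (T : nat)
    (s1 : strat A1) (s2 : strat A2) : Prop :=
  [/\ avail_strat r.1 s1, avail_strat r.2 s2 &
      forall h : history, (size h < T)%N ->
        repNash r u1 u2 (T - size h) (cont s1 h) (cont s2 h)].

Definition in_GLS (r : regime) (u1 u2 : A1 -> A2 -> R) : Prop :=
  exists T : nat, (1 <= T)%N /\
    exists (s1 : strat A1) (s2 : strat A2), SPE r u1 u2 T s1 s2 /\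
      exists h : history, (size h < T)%N /\ ~ stageNash r u1 u2 (s1 h) (s2 h).

End Game.

(* Main.v *)
Require Import Defs.
From HB Require Import structures.
From mathcomp Require Import all_boot all_order all_algebra.
From mathcomp Require Import reals lra.
Import Order.TTheory GRing.Theory Num.Theory.
Local Open Scope ring_scope.
Set Implicit Arguments. Unset Strict Implicit.

Section Aux.
Variables (R : realType) (A1 A2 : finType).

Definition dist (A : finType) (d : {ffun A -> R}) :=
  (forall a, 0 <= d a) /\ \sum_(a : A) d a = 1.

Lemma sum_delta (A : finType) (c : A) (F : A -> R) :
  \sum_(a : A) (if a == c then 1 else 0) * F a = F c.
Proof.
rewrite (bigD1 c) //= eqxx mul1r big1 ?addr0 // => a /negbTE ->; by rewrite mul0r.
Qed.

Lemma avail_dist mix (A : finType) (d : {ffun A -> R}) : avail mix d -> dist d.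
Proof.
case: mix => //= [[]] c Hc; split.
- by move=> b; rewrite Hc; case: ifP.
- rewrite (bigD1 c) //= Hc eqxx big1 ?addr0 // => b /negbTE bc; by rewrite Hc bc.
Qed.

Lemma eu_split (f g : A1 -> A2 -> R) d1 d2 :
  eu (fun a b => f a b + g a b) d1 d2 = eu f d1 d2 + eu g d1 d2.
Proof.
rewrite /eu -big_split /=; apply: eq_bigr => a _.
rewrite -big_split /=; apply: eq_bigr => b _; by rewrite mulrDr.
Qed.

Lemma eu_const (c : R) (d1 : {ffun A1 -> R}) (d2 : {ffun A2 -> R}) : dist d1 -> dist d2 -> eu (fun _ _ => c) d1 d2 = c.
Proof.
move=> [_ s1] [_ s2]; rewrite /eu.
transitivity (\sum_(a : A1) d1 a * c).
  apply: eq_bigr => a _.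
  rewrite -[RHS]mulr1 -s2 big_distrr /=.
  apply: eq_bigr => b _; by rewrite mulrAC.
by rewrite -mulr_suml s1 mul1r.
Qed.

Lemma eu_le (f : A1 -> A2 -> R) (c : R) (d1 : {ffun A1 -> R}) (d2 : {ffun A2 -> R}) : dist d1 -> dist d2 ->
  (forall a b, f a b <= c) -> eu f d1 d2 <= c.
Proof.
move=> D1 D2 H; rewrite -(eu_const c D1 D2).
apply: ler_sum => a _; apply: ler_sum => b _.
apply: ler_wpM2l => //; apply: mulr_ge0; [exact: D1.1 | exact: D2.1].
Qed.

Lemma eu_ge (f : A1 -> A2 -> R) (c : R) (d1 : {ffun A1 -> R}) (d2 : {ffun A2 -> R}) : dist d1 -> dist d2 ->
  (forall a b, c <= f a b) -> c <= eu f d1 d2.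
Proof.
move=> D1 D2 H; rewrite -(eu_const c D1 D2).
apply: ler_sum => a _; apply: ler_sum => b _.
apply: ler_wpM2l => //; apply: mulr_ge0; [exact: D1.1 | exact: D2.1].
Qed.

Lemma eu_r (u : A1 -> A2 -> R) (d1 : {ffun A1 -> R}) (d2 : {ffun A2 -> R}) c : (forall b, d2 b = (if b == c then 1 else 0)) ->
  eu u d1 d2 = \sum_(a : A1) d1 a * u a c.
Proof.
move=> H; rewrite /eu; apply: eq_bigr => a _.
under eq_bigr => b _ do rewrite H (mulrC (d1 a)) -mulrA.
by rewrite sum_delta.
Qed.

Lemma eu_l (u : A1 -> A2 -> R) (d1 : {ffun A1 -> R}) (d2 : {ffun A2 -> R}) c : (forall b, d1 b = (if b == c then 1 else 0)) ->
  eu u d1 d2 = \sum_(b : A2) d2 b * u c b.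
Proof.
move=> H; rewrite /eu; under eq_bigr => a _ do under eq_bigr => b _ do rewrite H -mulrA.
under eq_bigr => a _ do rewrite -big_distrr /=.
by rewrite sum_delta.
Qed.

Lemma eu_pure (u : A1 -> A2 -> R) (d1 : {ffun A1 -> R}) (d2 : {ffun A2 -> R}) c1 c2 :
  (forall b, d1 b = (if b == c1 then 1 else 0)) ->
  (forall b, d2 b = (if b == c2 then 1 else 0)) -> eu u d1 d2 = u c1 c2.
Proof.
move=> H1 H2; rewrite (eu_l _ _ H1).
under eq_bigr => b _ do rewrite H2. by rewrite sum_delta.
Qed.

Lemma pay_S (u : A1 -> A2 -> R) n (s1 : strat R A1 A2 A1) (s2 : strat R A1 A2 A2) h : @pay R A1 A2 u n.+1 s1 s2 h =
  eu (fun a b => u a b + pay u n s1 s2 (rcons h (a, b))) (s1 h) (s2 h).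
Proof. by []. Qed.

Lemma pay_le (u : A1 -> A2 -> R) n (s1 : strat R A1 A2 A1) (s2 : strat R A1 A2 A2) h M :
  (forall h', dist (s1 (h ++ h')) /\ dist (s2 (h ++ h'))) ->
  (forall h', eu u (s1 (h ++ h')) (s2 (h ++ h')) <= M) ->
  pay u n s1 s2 h <= n%:R * M.
Proof.
elim: n h => [|n IH] h HD HM; first by rewrite /= mul0r.
have := HD [::]; rewrite cats0 => -[D1 D2]; have := HM [::]; rewrite cats0 => H0.
rewrite pay_S (eu_split u (fun a b => pay u n s1 s2 (rcons h (a, b)))).
rewrite -nat1r mulrDl mul1r lerD //.
apply: eu_le => // a b; apply: IH => h'; rewrite -cats1 -catA /=; [exact: HD | exact: HM].
Qed.

Lemma pay_ge (u : A1 -> A2 -> R) n (s1 : strat R A1 A2 A1) (s2 : strat R A1 A2 A2) h M :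
  (forall h', dist (s1 (h ++ h')) /\ dist (s2 (h ++ h'))) ->
  (forall h', M <= eu u (s1 (h ++ h')) (s2 (h ++ h'))) ->
  n%:R * M <= pay u n s1 s2 h.
Proof.
elim: n h => [|n IH] h HD HM; first by rewrite /= mul0r.
have := HD [::]; rewrite cats0 => -[D1 D2]; have := HM [::]; rewrite cats0 => H0.
rewrite pay_S (eu_split u (fun a b => pay u n s1 s2 (rcons h (a, b)))).
rewrite -nat1r mulrDl mul1r lerD //.
apply: eu_ge => // a b; apply: IH => h'; rewrite -cats1 -catA /=; [exact: HD | exact: HM].
Qed.

Lemma pay_cont (u : A1 -> A2 -> R) n (s1 : strat R A1 A2 A1) (s2 : strat R A1 A2 A2) h h' :
  pay u n (cont s1 h) (cont s2 h) h' = pay u n s1 s2 (h ++ h').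
Proof.
elim: n h' => [|n IH] h' //=; rewrite /cont /=.
by apply: eq_bigr => a _; apply: eq_bigr => b _; rewrite IH rcons_cat.
Qed.

Lemma const_repNash r (u1 u2 : A1 -> A2 -> R) n (s1 : strat R A1 A2 A1) (s2 : strat R A1 A2 A2) d1 d2 :
  (forall h, s1 h = d1) -> (forall h, s2 h = d2) -> stageNash r u1 u2 d1 d2 ->
  repNash r u1 u2 n s1 s2.
Proof.
move=> H1 H2 [av1 av2 N1 N2]; split.
- move=> s1' av'; rewrite /payoff.
  apply: (@le_trans _ _ (n%:R * eu u1 d1 d2)).
    apply: pay_le => h'; rewrite H2; [split; [exact: avail_dist (av' _)| exact: avail_dist av2]|].
    exact: N1.
  apply: pay_ge => h'; rewrite H1 H2 //; split; [exact: avail_dist av1 | exact: avail_dist av2].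
- move=> s2' av'; rewrite /payoff.
  apply: (@le_trans _ _ (n%:R * eu u2 d1 d2)).
    apply: pay_le => h'; rewrite H1; [split; [exact: avail_dist av1| exact: avail_dist (av' _)]|].
    exact: N2.
  apply: pay_ge => h'; rewrite H1 H2 //; split; [exact: avail_dist av1 | exact: avail_dist av2].
Qed.

End Aux.
Section P1.
Variables (R : realType) (A1 A2 : finType).

Definition delta (A : finType) (c : A) : {ffun A -> R} := [ffun b => if b == c then 1 else 0].

Lemma deltaE (A : finType) (c : A) b : delta c b = if b == c then 1 else 0.
Proof. by rewrite ffunE. Qed.

Lemma ls_pp_aux (u1 u2 : A1 -> A2 -> R) a1 a2 b2 d1x d2x d1y d2y :
  (forall b1, u1 b1 a2 <= u1 a1 a2) -> u2 a1 a2 < u2 a1 b2 ->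
  stageNash reg_pp u1 u2 d1x d2x -> stageNash reg_pp u1 u2 d1y d2y ->
  eu u2 d1y d2y < eu u2 d1x d2x -> in_GLS reg_pp u1 u2.
Proof.
move=> Hbr Hdev Nx Ny Hxy.
set X := eu u2 d1x d2x; set Y := eu u2 d1y d2y.
set K := \sum_(b : A2) `|u2 a1 b - u2 a1 a2|.
set N := Num.bound (K / (X - Y)).
have XY : 0 < X - Y by rewrite subr_gt0.
have K0 : 0 <= K by apply: sumr_ge0 => b _.
have HN : K < N%:R * (X - Y).
  by rewrite -ltr_pdivrMr //; apply: archi_boundP; apply: divr_ge0 => //; apply: ltW.
have Hb : forall b, u2 a1 b - u2 a1 a2 <= K.
  move=> b; apply: le_trans (ler_norm _) _.
  rewrite /K (bigD1 b) //= lerDl; apply: sumr_ge0 => ? _; exact: normr_ge0.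
pose s1 : strat R A1 A2 A1 := fun h => match h with
  | [::] => delta a1 | p :: _ => if p.2 == a2 then d1x else d1y end.
pose s2 : strat R A1 A2 A2 := fun h => match h with
  | [::] => delta a2 | p :: _ => if p.2 == a2 then d2x else d2y end.
have [avx1 avx2 Nx1 Nx2] := Nx; have [avy1 avy2 Ny1 Ny2] := Ny.
have d1 : forall b, s1 [::] b = if b == a1 then 1 else 0 by move=> b; rewrite /= deltaE.
have d2 : forall b, s2 [::] b = if b == a2 then 1 else 0 by move=> b; rewrite /= deltaE.
exists N.+1; split => //; exists s1, s2; split; last first.
  exists [::]; split => //; move=> [_ _ _ N2].
  have := N2 (delta b2) (ex_intro _ b2 (@deltaE _ b2)).
  rewrite (eu_pure _ d1 (@deltaE _ b2)) (eu_pure _ d1 d2) => H.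
  by move: (lt_le_trans Hdev H); rewrite ltxx.
split.
- by move=> [|p t] /=; [exists a1 => b; rewrite deltaE | case: ifP].
- by move=> [|p t] /=; [exists a2 => b; rewrite deltaE | case: ifP].
move=> [_|p t _].
  rewrite subn0; split.
  + move=> s1' av'; have [c Hc] := av' [::].
    have -> : cont s2 [::] = s2 by [].
    have -> : cont s1 [::] = s1 by [].
    rewrite /payoff !pay_S (eu_pure _ Hc d2) (eu_pure _ d1 d2).
    apply: lerD => //.
    apply: (@le_trans _ _ (N%:R * eu u1 d1x d2x)).
      apply: pay_le => h' /=; rewrite eqxx.
        split; [exact: avail_dist (av' _) | exact: avail_dist avx2].
      exact: Nx1.
    apply: pay_ge => h' /=; rewrite eqxx //.
    split; [exact: avail_dist avx1 | exact: avail_dist avx2].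
  + move=> s2' av'; have [c Hc] := av' [::].
    have -> : cont s2 [::] = s2 by [].
    have -> : cont s1 [::] = s1 by [].
    rewrite /payoff !pay_S (eu_pure _ d1 Hc) (eu_pure _ d1 d2).
    have Heq : N%:R * X <= pay u2 N s1 s2 (rcons [::] (a1, a2)).
      apply: pay_ge => h' /=; rewrite eqxx //.
      split; [exact: avail_dist avx1 | exact: avail_dist avx2].
    apply: le_trans (lerD (lexx _) Heq).
    case: (eqVneq c a2) => [->|ca].
      apply: lerD => //.
      apply: pay_le => h' /=; rewrite eqxx.
        split; [exact: avail_dist avx1 | exact: avail_dist (av' _)].
      exact: Nx2.
    have HP : pay u2 N s1 s2' (rcons [::] (a1, c)) <= N%:R * Y.
      apply: pay_le => h' /=; rewrite (negbTE ca).
        split; [exact: avail_dist avy1 | exact: avail_dist (av' _)].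
      exact: Ny2.
    have := Hb c; move: HN HP; rewrite mulrBr.
    set P := pay _ _ _ _ _; set NX := N%:R * X; set NY := N%:R * Y.
    move=> *; lra.
apply: (@const_repNash _ _ _ _ _ _ _ _ _ (if p.2 == a2 then d1x else d1y)
   (if p.2 == a2 then d2x else d2y)) => //.
by case: ifP.
Qed.

End P1.

Unset Implicit Arguments. Set Strict Implicit.
Theorem mainTheorem9 (R : realType) (A1 A2 : finType)
    (hA1 : (0 < #|A1|)%N) (hA2 : (0 < #|A2|)%N)
    (u1 u2 : A1 -> A2 -> R)
    (hV1 : exists v : R, forall x : R, inV reg_pp u1 u2 u1 x <-> x = v)
    (hV2 : exists x y : R, [/\ inV reg_pp u1 u2 u2 x, inV reg_pp u1 u2 u2 y & x <> y]) :
  ~ in_GLS reg_pp u1 u2 -> ~ in_GLS reg_mp u1 u2.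
Proof.
move=> NLS.
have [v hv] := hV1.
have [x [y [[d1x [d2x [Nx ->]]] [d1y [d2y [Ny ->]]] xy]]] := hV2.
have [a10 _] := card_gt0P hA1; have [a20 _] := card_gt0P hA2.
have C0 : forall a1 a2, (forall b1, u1 b1 a2 <= u1 a1 a2) ->
    forall b2, u2 a1 b2 <= u2 a1 a2.
  move=> a1 a2 Hbr b2; case: (leP (u2 a1 b2) (u2 a1 a2)) => // Hd.
  exfalso; apply: NLS.
  case: (ltgtP (eu u2 d1x d2x) (eu u2 d1y d2y)) => [lt|lt|eq] //.
    exact: (ls_pp_aux Hbr Hd Ny Nx lt).
  exact: (ls_pp_aux Hbr Hd Nx Ny lt).
pose br a2 := [arg max_(i > a10) u1 i a2]%O.
have Hbr : forall a2, u1 (br a2) a2 = v /\ forall a1, u1 a1 a2 <= v.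
  move=> a2; rewrite /br; case: (@arg_maxP _ _ _ a10 xpredT (fun i => u1 i a2)) => //.
  move=> i _ Hi.
  have Hi' : forall b1, u1 b1 a2 <= u1 i a2 by move=> b1; exact: (Hi b1 isT).
  have HN : stageNash reg_pp u1 u2 (delta R i) (delta R a2).
    split.
    - by exists i => b; rewrite deltaE.
    - by exists a2 => b; rewrite deltaE.
    - move=> d1' [c Hc] /=; rewrite (eu_pure _ Hc (@deltaE _ _ a2)).
      by rewrite (eu_pure _ (@deltaE _ _ i) (@deltaE _ _ a2)).
    - move=> d2' [c Hc] /=; rewrite (eu_pure _ (@deltaE _ _ i) Hc).
      rewrite (eu_pure _ (@deltaE _ _ i) (@deltaE _ _ a2)); exact: C0.
  have : inV reg_pp u1 u2 u1 (u1 i a2).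
    exists (delta R i), (delta R a2); split => //.
    by rewrite (eu_pure _ (@deltaE _ _ i) (@deltaE _ _ a2)).
  move/hv => Ev; split => // a1; rewrite -Ev; exact: Hi'.
have umax : forall a1 a2, u1 a1 a2 <= v by move=> a1 a2; exact: (Hbr a2).2.
have C : forall a1 a2, u1 a1 a2 = v -> forall b2, u2 a1 b2 <= u2 a1 a2.
  by move=> a1 a2 E; apply: C0 => b1; rewrite E.
pose a2of (d : {ffun A2 -> R}) := odflt a20 [pick a | d a == 1].
have a2ofP : forall (d : {ffun A2 -> R}) (a : A2), (forall b, d b = if b == a then 1 else 0) -> a2of d = a.
  move=> d a Hd; rewrite /a2of; case: pickP => [a' |H] /=.
    rewrite Hd; case: (a' =P a) => // _; by rewrite eq_sym oner_eq0.
  by have := H a; rewrite Hd !eqxx.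
move=> [T [_ [s1 [s2 [[av1 av2 Hrep] [h [hT hN]]]]]]]; apply: hN.
have E : forall h, (size h <= T)%N -> pay u1 (T - size h) s1 s2 h = (T - size h)%:R * v.
  move=> h' hs; case: (ltnP (size h') T) => hs'; last first.
    have -> : (T - size h' = 0)%N by apply/eqP; rewrite subn_eq0.
    by rewrite mul0r.
  have [R1 _] := Hrep h' hs'.
  apply: le_anti; apply/andP; split.
    apply: pay_le => h''; first by split; [exact: avail_dist (av1 _) | exact: avail_dist (av2 _)].
    apply: eu_le => //; [exact: avail_dist (av1 _) | exact: avail_dist (av2 _)].
  pose s1' : strat R A1 A2 A1 := fun k => delta R (br (a2of (s2 (h' ++ k)))).
  have av' : avail_strat true s1' by move=> k; apply: (@avail_dist _ false); exists (br (a2of (s2 (h' ++ k)))) => b; rewrite deltaE.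
  have := R1 s1' av'; rewrite /payoff pay_cont cats0; apply: le_trans.
  apply: pay_ge => k /=.
    split; [exact: (av' k) | exact: avail_dist (av2 _)].
  have [a Ha] := av2 (h' ++ k).
  rewrite /s1' (eu_pure _ (@deltaE _ _ _) Ha) (a2ofP _ _ Ha); by rewrite (Hbr a).1.
have [D1 D2] : dist (s1 h) /\ dist (s2 h) by split; [exact: avail_dist (av1 _) | exact: avail_dist (av2 _)].
have Hv : eu u1 (s1 h) (s2 h) = v.
  have := E h (ltnW hT); rewrite -subnSK // pay_S.
  have -> : eu (fun a b => u1 a b + pay u1 (T - (size h).+1) s1 s2 (rcons h (a, b))) (s1 h) (s2 h)
     = eu (fun a b => u1 a b + (fun _ _ => (T - (size h).+1)%:R * v) a b) (s1 h) (s2 h).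
    apply: eq_bigr => a _; apply: eq_bigr => b _; congr (_ * (_ + _)).
    by rewrite -(size_rcons h (a, b)) E // size_rcons.
  rewrite eu_split eu_const // -nat1r mulrDl mul1r => /addIr.
  by move=> ->.
split; [exact: av1 | exact: av2 | |].
- move=> d1' av; rewrite Hv; apply: eu_le => //; exact: avail_dist av.
- move=> d2' [b Hb]; have [a Ha] := av2 h.
  rewrite (eu_r _ _ Hb) (eu_r _ _ Ha); apply: ler_sum => a1 _.
  rewrite (eu_r _ _ Ha) in Hv.
  have H0 : \sum_(a1 : A1) s1 h a1 * (v - u1 a1 a) = 0.
    under eq_bigr => a1' _ do rewrite mulrBr.
    by rewrite sumrB Hv -mulr_suml D1.2 mul1r subrr.
  have Hge : forall a1', true -> 0 <= s1 h a1' * (v - u1 a1' a).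
    by move=> a1' _; apply: mulr_ge0; [exact: D1.1 | rewrite subr_ge0; exact: umax].
  have := psumr_eq0P Hge H0 (i:=a1) isT.
  move/eqP; rewrite mulf_eq0 => /orP[/eqP ->|]; first by rewrite !mul0r.
  rewrite subr_eq0 => /eqP Ev; apply: ler_wpM2l; [exact: D1.1 | exact: (C a1 a (esym Ev) b)].
Qed.
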